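(* Let $(\psi,p,A)$ be a regular normal extremal containing an interior three-bang block $X(\tau_X)\,Y(\ell)\,X(\tau_X)$, i.e. three consecutive arcs, an $X$-arc of length $\tau_X=\pi/\sin\gamma$, a $Y$-arc of length $\ell\in(0,2\pi)$, and an $X$-arc of length $\tau_X$, whose initial and final times are both switching times. If the reduced data at the initial time of the block are $(0,a,b)$ with $a\neq0$, then the reduced data at its final time are $(0,-a,b)$, i.e. the same as those produced by a single switching-to-switching $Y$-arc started from $(0,a,b)$, while the block has total length $2\pi/\sin\gamma+\ell$, strictly larger than the length (in $(0,2\pi)$) of that $Y$-arc. Consequently, such an interior $XYX$ block cannot occur on a regular normal time-optimal extremal.
   Context: Fix $\gamma\in(0,\pi/2)$, $s=\sin\gamma$, $c=\cos\gamma$, and $X=\begin{pmatrix}0&s^2&sc\\-s^2&0&0\\-sc&0&0\end{pmatrix}$, $Y=\begin{pmatrix}0&1&0\\-1&0&0\\0&0&0\end{pmatrix}$ on $\mathbb R^3$ with standard basis $e_1,e_2,e_3$ and standard inner product. Let $\Sigma=\{\psi:\langle e_3,\psi\rangle=0\}$, $\psi_0=(0,s,c)^\top$. Time-optimal problem: over piecewise constant controls $A:[0,T]\to\{X,Y\}$ with finitely many discontinuities (switching times) and trajectories $\dot\psi=A(t)\psi$, $\psi(0)=\psi_0$, minimize $T$ subject to $\psi(T)\in\Sigma$. Maximal intervals on which $A\equiv X$ (resp. $Y$) are $X$-arcs (resp. $Y$-arcs), also called bangs. A normal extremal is such a trajectory with a nonzero absolutely continuous costate $p$ satisfying $\dot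 p=-A(t)^\top p$ and, for a.e. $t$, $\langle p,A(t)\psi\rangle-1=\max_{B\in\{X,Y\}}(\langle p,B\psi\rangle-1)$. Let $F_1=X-Y$, $F_2=[X,Y]$, $F_3=[Y,[X,Y]]$, and reduced data $(\phi_1,\phi_2,\phi_3)$ with $\phi_i=\langle p,F_i\psi\rangle$; the switching function is $\Phi=\phi_1$. A normal extremal is regular (bang–bang) if $\Phi$ vanishes only at isolated times and at every switching time $\phi_1=0$ and $\phi_2\neq 0$. Time-optimal means the trajectory solves the minimization problem. *)

(* Defs.v *)
From Stdlib Require Import Reals Lra Lia.
Open Scope R_scope.

Record vec3 := V3 { v1 : R; v2 : R; v3 : R }.
Record mat3 := M3 { m11 : R; m12 : R; m13 : R;
                    m21 : R; m22 : R; m23 : R;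
                    m31 : R; m32 : R; m33 : R }.

Definition vzero : vec3 := V3 0 0 0.
Definition dot (u w : vec3) : R := v1 u * v1 w + v2 u * v2 w + v3 u * v3 w.
Definition mv (M : mat3) (u : vec3) : vec3 :=
  V3 (m11 M * v1 u + m12 M * v2 u + m13 M * v3 u)
     (m21 M * v1 u + m22 M * v2 u + m23 M * v3 u)
     (m31 M * v1 u + m32 M * v2 u + m33 M * v3 u).
Definition mmul (A B : mat3) : mat3 :=
  M3 (m11 A * m11 B + m12 A * m21 B + m13 A * m31 B)
     (m11 A * m12 B + m12 A * m22 B + m13 A * m32 B)
     (m11 A * m13 B + m12 A * m23 B + m13 A * m33 B)
     (m21 A * m11 B + m22 A * m21 B + m23 A * m31 B)
     (m21 A * m12 B + m22 A * m22 B + m23 A * m32 B)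
     (m21 A * m13 B + m22 A * m23 B + m23 A * m33 B)
     (m31 A * m11 B + m32 A * m21 B + m33 A * m31 B)
     (m31 A * m12 B + m32 A * m22 B + m33 A * m32 B)
     (m31 A * m13 B + m32 A * m23 B + m33 A * m33 B).
Definition msub (A B : mat3) : mat3 :=
  M3 (m11 A - m11 B) (m12 A - m12 B) (m13 A - m13 B)
     (m21 A - m21 B) (m22 A - m22 B) (m23 A - m23 B)
     (m31 A - m31 B) (m32 A - m32 B) (m33 A - m33 B).
Definition mopp (A : mat3) : mat3 :=
  M3 (- m11 A) (- m12 A) (- m13 A) (- m21 A) (- m22 A) (- m23 A)
     (- m31 A) (- m32 A) (- m33 A).
Definition mtr (A : mat3) : mat3 :=
  M3 (m11 A) (m21 A) (m31 A) (m12 A) (m22 A) (m32 A) (m13 A) (m23 A) (m33 A).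
Definition bracket (A B : mat3) : mat3 := msub (mmul A B) (mmul B A).

Definition Xm (g : R) : mat3 :=
  M3 0 (sin g ^ 2) (sin g * cos g)
     (- sin g ^ 2) 0 0
     (- (sin g * cos g)) 0 0.
Definition Ym : mat3 := M3 0 1 0 (-1) 0 0 0 0 0.

Definition F1 (g : R) : mat3 := msub (Xm g) Ym.
Definition F2 (g : R) : mat3 := bracket (Xm g) Ym.
Definition F3 (g : R) : mat3 := bracket Ym (bracket (Xm g) Ym).

Definition psi0 (g : R) : vec3 := V3 0 (sin g) (cos g).
Definition inSigma (u : vec3) : Prop := v3 u = 0.

Definition redd (g : R) (psi p : vec3) : vec3 :=
  V3 (dot p (mv (F1 g) psi)) (dot p (mv (F2 g) psi)) (dot p (mv (F3 g) psi)).
Definition Phi (g : R) (psi p : vec3) : R := dot p (mv (F1 g) psi).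

Inductive ctrl := CX | CY.
Definition cmat (g : R) (c : ctrl) : mat3 :=
  match c with CX => Xm g | CY => Ym end.

Definition deriv_vec (f : R -> vec3) (u : R) (d : vec3) : Prop :=
  derivable_pt_lim (fun s => v1 (f s)) u (v1 d) /\
  derivable_pt_lim (fun s => v2 (f s)) u (v2 d) /\
  derivable_pt_lim (fun s => v3 (f s)) u (v3 d).
Definition cont_vec (f : R -> vec3) : Prop :=
  forall u, continuity_pt (fun s => v1 (f s)) u /\
            continuity_pt (fun s => v2 (f s)) u /\
            continuity_pt (fun s => v3 (f s)) u.

(* A piecewise constant bang-bang control on [0,T]: arcs (sw i, sw (i+1)),
   i < n_arcs, carrying control lab i; consecutive labels differ, so the arcs
   are the maximal X-/Y-arcs and the switching times are sw j, 1 <= j <= n-1. *)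
Record schedule := Sched { n_arcs : nat; sw : nat -> R; lab : nat -> ctrl }.

Definition admissible (S : schedule) (T : R) : Prop :=
  (1 <= n_arcs S)%nat /\ sw S 0 = 0 /\ sw S (n_arcs S) = T /\
  (forall i, (i < n_arcs S)%nat -> sw S i < sw S (i + 1)) /\
  (forall i, (i + 1 < n_arcs S)%nat -> lab S i <> lab S (i + 1)).

Definition trajectory (g : R) (S : schedule) (psi : R -> vec3) : Prop :=
  cont_vec psi /\ psi 0 = psi0 g /\
  forall i u, (i < n_arcs S)%nat -> sw S i < u < sw S (i + 1) ->
    deriv_vec psi u (mv (cmat g (lab S i)) (psi u)).

Definition normal_extremal (g T : R) (S : schedule) (psi p : R -> vec3) : Prop :=
  admissible S T /\ trajectory g S psi /\
  cont_vec p /\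
  (exists u, 0 <= u <= T /\ p u <> vzero) /\
  (forall i u, (i < n_arcs S)%nat -> sw S i < u < sw S (i + 1) ->
     deriv_vec p u (mv (mopp (mtr (cmat g (lab S i)))) (p u)) /\
     dot (p u) (mv (cmat g (lab S i)) (psi u)) - 1 =
       Rmax (dot (p u) (mv (Xm g) (psi u)) - 1)
            (dot (p u) (mv Ym (psi u)) - 1)).

Definition regular (g T : R) (S : schedule) (psi p : R -> vec3) : Prop :=
  (forall u, 0 <= u <= T -> Phi g (psi u) (p u) = 0 ->
     exists d, 0 < d /\ forall v, 0 <= v <= T -> 0 < Rabs (v - u) < d ->
       Phi g (psi v) (p v) <> 0) /\
  (forall j, (1 <= j)%nat -> (j <= n_arcs S - 1)%nat ->
     v1 (redd g (psi (sw S j)) (p (sw S j))) = 0 /\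
     v2 (redd g (psi (sw S j)) (p (sw S j))) <> 0).

Definition time_optimal (g T : R) (S : schedule) (psi : R -> vec3) : Prop :=
  admissible S T /\ trajectory g S psi /\ inSigma (psi T) /\
  forall T' S' psi', admissible S' T' -> trajectory g S' psi' ->
    inSigma (psi' T') -> T <= T'.

Definition Y_arc (L : R) (psi p : R -> vec3) : Prop :=
  cont_vec psi /\ cont_vec p /\
  forall u, 0 < u < L ->
    deriv_vec psi u (mv Ym (psi u)) /\
    deriv_vec p u (mv (mopp (mtr Ym)) (p u)).

(* Main.v *)
Require Import Defs.
From Stdlib Require Import Reals Lra Lia Psatz.
From Coquelicot Require Import Coquelicot.
Open Scope R_scope.

Definition cross (u w : vec3) : vec3 :=
  V3 (v2 u * v3 w - v3 u * v2 w) (v3 u * v1 w - v1 u * v3 w) (v1 u * v2 w - v2 u * v1 w).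

Ltac red3 := cbv beta iota delta [redd Phi cross dot mv mopp mtr F1 F2 F3 bracket msub mmul Xm Ym v1 v2 v3 m11 m12 m13 m21 m22 m23 m31 m32 m33] in *.

Lemma redd_cross g ps p :
  redd g ps p = V3 (sin g * cos g * v2 (cross ps p) + (1 - sin g ^ 2) * v3 (cross ps p))
                   (- (sin g * cos g) * v1 (cross ps p)) (sin g * cos g * v2 (cross ps p)).
Proof. destruct ps as [a1 a2 a3], p as [b1 b2 b3]. red3. f_equal; ring. Qed.

Definition skew (M : mat3) : Prop :=
  m11 M = 0 /\ m22 M = 0 /\ m33 M = 0 /\ m21 M = - m12 M /\ m31 M = - m13 M /\ m32 M = - m23 M.

Lemma skewX g : skew (Xm g). Proof. unfold skew; red3; repeat split; ring. Qed.
Lemma skewY : skew Ym. Proof. unfold skew; red3; repeat split; ring. Qed.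

Lemma dmul f g x a b : derivable_pt_lim f x a -> derivable_pt_lim g x b ->
  derivable_pt_lim (fun t => f t * g t) x (a * g x + f x * b).
Proof. intros; exact (derivable_pt_lim_mult f g x a b H H0). Qed.
Lemma dsub f g x a b : derivable_pt_lim f x a -> derivable_pt_lim g x b ->
  derivable_pt_lim (fun t => f t - g t) x (a - b).
Proof. intros; exact (derivable_pt_lim_minus f g x a b H H0). Qed.
Lemma dplus f g x a b : derivable_pt_lim f x a -> derivable_pt_lim g x b ->
  derivable_pt_lim (fun t => f t + g t) x (a + b).
Proof. intros; exact (derivable_pt_lim_plus f g x a b H H0). Qed.
Lemma dext f x a b : derivable_pt_lim f x a -> a = b -> derivable_pt_lim f x b.
Proof. intros; subst; auto. Qed.

Lemma cmul f g x : continuity_pt f x -> continuity_pt g x -> continuity_pt (fun t => f t * g t) x.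
Proof. intros; exact (continuity_pt_mult f g x H H0). Qed.
Lemma csub f g x : continuity_pt f x -> continuity_pt g x -> continuity_pt (fun t => f t - g t) x.
Proof. intros; exact (continuity_pt_minus f g x H H0). Qed.
Lemma cplus f g x : continuity_pt f x -> continuity_pt g x -> continuity_pt (fun t => f t + g t) x.
Proof. intros; exact (continuity_pt_plus f g x H H0). Qed.

Lemma h_deriv M ps p u : skew M ->
  deriv_vec ps u (mv M (ps u)) -> deriv_vec p u (mv (mopp (mtr M)) (p u)) ->
  deriv_vec (fun t => cross (ps t) (p t)) u (mv M (cross (ps u) (p u))).
Proof.
  intros (e1 & e2 & e3 & e4 & e5 & e6) (a1 & a2 & a3) (b1 & b2 & b3).
  destruct M; unfold deriv_vec in *; red3; subst.
  repeat split; (eapply dext; [apply dsub; apply dmul; eassumption|]);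
  simpl; ring.
Qed.

Lemma uniq M f F t0 t1 : skew M -> t0 <= t1 -> cont_vec f -> cont_vec F ->
  (forall u, t0 < u < t1 -> deriv_vec f u (mv M (f u))) ->
  (forall u, t0 < u < t1 -> deriv_vec F u (mv M (F u))) ->
  f t0 = F t0 -> f t1 = F t1.
Proof.
  intros (e1 & e2 & e3 & e4 & e5 & e6) Ht cf cF df dF H0.
  set (E := fun t => (v1 (f t) - v1 (F t)) * (v1 (f t) - v1 (F t))
     + (v2 (f t) - v2 (F t)) * (v2 (f t) - v2 (F t))
     + (v3 (f t) - v3 (F t)) * (v3 (f t) - v3 (F t))).
  assert (Hd : forall x, t0 < x < t1 -> derivable_pt_lim E x 0).
  { intros x Hx. destruct (df x Hx) as (a1 & a2 & a3). destruct (dF x Hx) as (b1 & b2 & b3).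
    unfold E. eapply dext.
    apply dplus; [apply dplus|]; apply dmul; apply dsub; eassumption.
    destruct M; red3; subst. ring. }
  assert (Hc : forall x, t0 <= x <= t1 -> continuity_pt E x).
  { intros x _. destruct (cf x) as (c1 & c2 & c3). destruct (cF x) as (d1 & d2 & d3).
    unfold E.
    repeat first [apply csub | apply cplus | apply cmul]; assumption. }
  pose (pr := fun x (P : t0 < x < t1) => exist (fun l => derivable_pt_abs E x l) 0 (Hd x P)).
  pose proof (null_derivative_loc E t0 t1 pr Hc (fun x P => eq_refl)) as HC.
  assert (HE : E t1 = E t0) by (apply HC; lra).
  assert (E t0 = 0) by (unfold E; rewrite H0; ring).
  rewrite H in HE. unfold E in HE. destruct (f t1) as [x1 x2 x3], (F t1) as [y1 y2 y3]. simpl in HE.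
  assert ((x1-y1)*(x1-y1) = 0 /\ (x2-y2)*(x2-y2) = 0 /\ (x3-y3)*(x3-y3)=0) as (Z1&Z2&Z3).
  { pose proof (Rle_0_sqr (x1-y1)); pose proof (Rle_0_sqr (x2-y2)); pose proof (Rle_0_sqr (x3-y3)).
    unfold Rsqr in *. lra. }
  apply Rsqr_0_uniq in Z1; apply Rsqr_0_uniq in Z2; apply Rsqr_0_uniq in Z3.
  f_equal; lra.
Qed.

Definition HY (h : vec3) (t0 t : R) : vec3 :=
  V3 (v1 h * cos (t - t0) + v2 h * sin (t - t0))
     (- v1 h * sin (t - t0) + v2 h * cos (t - t0)) (v3 h).

Definition HX (g : R) (h : vec3) (t0 t : R) : vec3 :=
  let s := sin g in let c := cos g in
  let k0 := s * v2 h + c * v3 h in let m := c * v2 h - s * v3 h in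
  let K := - v1 h * sin (s * (t - t0)) + k0 * cos (s * (t - t0)) in
  V3 (v1 h * cos (s * (t - t0)) + k0 * sin (s * (t - t0))) (s * K + c * m) (c * K - s * m).

Lemma HY_deriv h t0 u : deriv_vec (fun t => HY h t0 t) u (mv Ym (HY h t0 u)).
Proof.
  destruct h; unfold deriv_vec, HY; red3; repeat split; apply is_derive_Reals;
  auto_derive; try exact I; unfold Rminus; ring.
Qed.

Lemma HX_deriv g h t0 u : deriv_vec (fun t => HX g h t0 t) u (mv (Xm g) (HX g h t0 u)).
Proof.
  pose proof (sin2_cos2 g) as E. unfold Rsqr in E.
  destruct h; unfold deriv_vec, HX; red3; repeat split; apply is_derive_Reals;
  auto_derive; try exact I; unfold Rminus.
  - set (T := sin g * (u + - t0)).
    assert (HH: sin g * (- v1 * sin T + (sin g * v2 + cos g * v3) * cos T) * (sin g * sin g + cos g * cos g) = sin g * (- v1 * sin T + (sin g * v2 + cos g * v3) * cos T)) by (rewrite E; ring).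
    lra.
  - ring.
  - ring.
Qed.

Lemma cont_of_deriv (f : R -> vec3) (d : R -> vec3) :
  (forall u, deriv_vec f u (d u)) -> cont_vec f.
Proof.
  intros H u. destruct (H u) as (a & b & c).
  repeat split; apply derivable_continuous_pt; eexists; eassumption.
Qed.

Lemma HY_0 h t0 : HY h t0 t0 = h.
Proof. destruct h; unfold HY; simpl; rewrite Rminus_diag, sin_0, cos_0; f_equal; ring. Qed.

Lemma HX_0 g h t0 : HX g h t0 t0 = h.
Proof. pose proof (sin2_cos2 g) as E. unfold Rsqr in E.
  destruct h as [a b c]; unfold HX; cbn [v1 v2 v3]. rewrite Rminus_diag, Rmult_0_r, sin_0, cos_0; f_equal.
  - ring.
  - assert (HH : b * (sin g * sin g + cos g * cos g) = b) by (rewrite E; ring). lra.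
  - assert (HH : c * (sin g * sin g + cos g * cos g) = c) by (rewrite E; ring). lra.
Qed.

Lemma cont_cross psi p : cont_vec psi -> cont_vec p -> cont_vec (fun t => cross (psi t) (p t)).
Proof.
  intros cp cq u. destruct (cp u) as (a1&a2&a3), (cq u) as (b1&b2&b3).
  unfold cross; cbn [v1 v2 v3]. repeat split; apply csub; apply cmul; assumption.
Qed.

Definition Hsol (g : R) (c : ctrl) := match c with CX => HX g | CY => HY end.

Lemma Hsol_ok g c h t0 : cont_vec (fun t => Hsol g c h t0 t) /\
  forall u, deriv_vec (fun t => Hsol g c h t0 t) u (mv (cmat g c) (Hsol g c h t0 u)).
Proof.
  destruct c; simpl.
  - split; [eapply cont_of_deriv|]; intros; apply HX_deriv.
  - split; [eapply cont_of_deriv|]; intros; apply HY_deriv.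
Qed.

Lemma Hsol_0 g c h t0 : Hsol g c h t0 t0 = h.
Proof. destruct c; simpl; [apply HX_0|apply HY_0]. Qed.

Lemma skew_c g c : skew (cmat g c).
Proof. destruct c; [apply skewX|apply skewY]. Qed.

Lemma arc_h g T S psi p i : normal_extremal g T S psi p -> (i < n_arcs S)%nat ->
  cross (psi (sw S (i+1))) (p (sw S (i+1))) =
  Hsol g (lab S i) (cross (psi (sw S i)) (p (sw S i))) (sw S i) (sw S (i+1)).
Proof.
  intros (Ad & (cpsi & _ & dpsi) & cp & _ & dp) Hi.
  destruct (Hsol_ok g (lab S i) (cross (psi (sw S i)) (p (sw S i))) (sw S i)) as (cH & dH).
  apply (uniq (cmat g (lab S i)) (fun t => cross (psi t) (p t))
    (fun t => Hsol g (lab S i) (cross (psi (sw S i)) (p (sw S i))) (sw S i) t) (sw S i) (sw S (i+1))).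
  - apply skew_c.
  - destruct Ad as (_&_&_&Hm&_). left; auto.
  - apply cont_cross; auto.
  - exact cH.
  - intros u Hu. apply h_deriv; [apply skew_c| apply dpsi; auto | apply (dp i u Hi Hu)].
  - intros u Hu; apply dH.
  - rewrite Hsol_0; reflexivity.
Qed.

Lemma yarc_h L psi p u : Y_arc L psi p -> 0 <= u <= L ->
  cross (psi u) (p u) = HY (cross (psi 0) (p 0)) 0 u.
Proof.
  intros (cpsi & cp & d) Hu.
  apply (uniq Ym (fun t => cross (psi t) (p t)) (fun t => HY (cross (psi 0) (p 0)) 0 t) 0 u).
  - apply skewY.
  - lra.
  - apply cont_cross; auto.
  - eapply cont_of_deriv; intros; apply HY_deriv.
  - intros v Hv. destruct (d v ltac:(lra)). apply h_deriv; auto; apply skewY.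
  - intros; apply HY_deriv.
  - rewrite HY_0; reflexivity.
Qed.

Lemma sw_mono Sc T : admissible Sc T -> forall k i, (i + k <= n_arcs Sc)%nat -> sw Sc i <= sw Sc (i + k).
Proof.
  intros (_&_&_&Hm&_). induction k as [|k IHk]; intros i Hi.
  - rewrite Nat.add_0_r; lra.
  - specialize (IHk i ltac:(lia)). specialize (Hm (i + k)%nat ltac:(lia)).
    replace (i + Datatypes.S k)%nat with (i + k + 1)%nat by lia. lra.
Qed.

Lemma HX_pi g h t0 t1 : sin g <> 0 -> t1 - t0 = PI / sin g ->
  HX g h t0 t1 = V3 (- v1 h) (- sin g * (sin g * v2 h + cos g * v3 h) + cos g * (cos g * v2 h - sin g * v3 h))
     (- cos g * (sin g * v2 h + cos g * v3 h) - sin g * (cos g * v2 h - sin g * v3 h)).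
Proof.
  intros Hs Ht. unfold HX. rewrite Ht.
  replace (sin g * (PI / sin g)) with PI by (field; auto).
  rewrite sin_PI, cos_PI. f_equal; ring.
Qed.

Definition xtraj (g : R) (t : R) : vec3 :=
  V3 (sin (sin g * t)) (sin g * cos (sin g * t)) (cos g * cos (sin g * t)).

Lemma xtraj_deriv g u : deriv_vec (xtraj g) u (mv (Xm g) (xtraj g u)).
Proof.
  pose proof (sin2_cos2 g) as E. unfold Rsqr in E.
  unfold deriv_vec, xtraj; red3; repeat split; apply is_derive_Reals;
  auto_derive; try exact I.
  - assert (HH : cos (sin g * u) * sin g * (sin g * sin g + cos g * cos g) = cos (sin g * u) * sin g)
      by (rewrite E; ring). lra.
  - ring.
  - ring.
Qed.

Lemma not_opt g T S psi : 0 < sin g -> T > PI / (2 * sin g) -> ~ time_optimal g T S psi.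
Proof.
  intros Hs HT (_ & _ & _ & Hopt).
  set (S' := Sched 1 (fun i => match i with O => 0 | _ => PI / (2 * sin g) end) (fun _ => CX)).
  assert (PI / (2 * sin g) > 0) by (pose proof PI_RGT_0; apply Rdiv_lt_0_compat; lra).
  specialize (Hopt (PI / (2 * sin g)) S' (xtraj g)).
  assert (T <= PI / (2 * sin g)); [|lra].
  apply Hopt.
  - unfold admissible, S'; simpl. repeat split; try lia; try lra;
    intros i Hi; destruct i; simpl; try lra; lia.
  - split; [eapply cont_of_deriv; intros; apply xtraj_deriv|split].
    + unfold xtraj, psi0. rewrite Rmult_0_r, sin_0, cos_0. f_equal; ring.
    + intros; simpl. apply xtraj_deriv.
  - unfold inSigma, xtraj; simpl.
    replace (sin g * (PI / (2 * sin g))) with (PI / 2) by (field; lra).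
    rewrite cos_PI2; ring.
Qed.

Theorem mainTheorem12 :
  forall (g : R), 0 < g < PI / 2 ->
  forall (T : R) (S : schedule) (psi p : R -> vec3),
  normal_extremal g T S psi p -> regular g T S psi p ->
  forall (j : nat) (l a b : R),
  (1 <= j)%nat -> (j + 3 <= n_arcs S - 1)%nat ->
  lab S j = CX -> lab S (j + 1) = CY -> lab S (j + 2) = CX ->
  sw S (j + 1) - sw S j = PI / sin g ->
  sw S (j + 2) - sw S (j + 1) = l ->
  sw S (j + 3) - sw S (j + 2) = PI / sin g ->
  0 < l < 2 * PI ->
  redd g (psi (sw S j)) (p (sw S j)) = V3 0 a b -> a <> 0 ->
  redd g (psi (sw S (j + 3))) (p (sw S (j + 3))) = V3 0 (- a) b /\
  sw S (j + 3) - sw S j = 2 * PI / sin g + l /\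
  (exists L, 0 < L < 2 * PI /\ L < sw S (j + 3) - sw S j /\
     forall psi' p', Y_arc L psi' p' ->
       redd g (psi' 0) (p' 0) = V3 0 a b ->
       redd g (psi' L) (p' L) = V3 0 (- a) b /\
       (forall u, 0 < u < L -> Phi g (psi' u) (p' u) <> 0)) /\
  ~ time_optimal g T S psi.
Proof.
  intros g Hg T S psi p NE RG j l a b Hj Hjn L1 L2 L3 D1 D2 D3 Hl R0 Ha.
  pose proof PI_RGT_0 as HPI.
  assert (Hs : 0 < sin g) by (apply sin_gt_0; lra).
  assert (Hc : 0 < cos g) by (apply cos_gt_0; lra).
  pose proof (sin2_cos2 g) as E. unfold Rsqr in E.
  assert (Hs1 : sin g <= 1) by (pose proof (SIN_bound g); lra).
  set (s := sin g) in *. set (c := cos g) in *.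
  assert (Htime : sw S (j + 3) - sw S j = 2 * PI / s + l).
  { replace (2 * PI / s) with (PI / s + PI / s) by (field; lra). lra. }
  assert (Hbig : 2 * PI <= 2 * PI / s).
  { apply (Rmult_le_reg_r s); auto. replace (2 * PI / s * s) with (2 * PI) by (field; lra). nra. }
  pose proof (arc_h g T S psi p j NE ltac:(lia)) as A1.
  pose proof (arc_h g T S psi p (j+1) NE ltac:(lia)) as A2.
  pose proof (arc_h g T S psi p (j+2) NE ltac:(lia)) as A3.
  replace (j + 1 + 1)%nat with (j + 2)%nat in A2 by lia.
  replace (j + 2 + 1)%nat with (j + 3)%nat in A3 by lia.
  rewrite L1 in A1. rewrite L2 in A2. rewrite L3 in A3. cbn [Hsol] in A1, A2, A3.
  rewrite (HX_pi g _ _ _ (Rgt_not_eq _ _ Hs) D1) in A1.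
  rewrite (HX_pi g _ _ _ (Rgt_not_eq _ _ Hs) D3) in A3.
  unfold HY in A2. rewrite D2 in A2.
  destruct RG as [_ RG]. destruct (RG (j+2)%nat ltac:(lia) ltac:(lia)) as [Rg2 _].
  rewrite redd_cross in Rg2, R0. cbn [v1] in Rg2.
  rewrite A2, A1 in Rg2. rewrite A1 in A2.
  destruct (cross (psi (sw S j)) (p (sw S j))) as [h1 h2 h3].
  cbn [v1 v2 v3] in *.
  change (sin g) with s in R0, A1, A2, A3, Rg2 |- *. change (cos g) with c in R0, A1, A2, A3, Rg2 |- *.
  injection R0 as R1 R2 R3.
  set (C := cos l) in *. set (Sl := sin l) in *.
  assert (HCS : Sl * Sl + C * C = 1) by (pose proof (sin2_cos2 l) as EE; unfold Rsqr in EE; exact EE).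
  assert (Hsc : 0 < s * c) by nra.
  assert (Ec : 1 - s * (s * 1) = c * c) by lra.
  assert (K0 : s * h2 + c * h3 = 0).
  { rewrite Ec in R1. apply (Rmult_eq_reg_l c); [|lra]. lra. }
  assert (Hh1 : h1 <> 0) by (intro H0; apply Ha; rewrite <- R2, H0; ring).
  assert (Cm : c * (c * h2 - s * h3) = h2).
  { assert (c * h3 = - s * h2) by lra.
    replace (c * (c * h2 - s * h3)) with (c * c * h2 - s * (c * h3)) by ring. rewrite H.
    replace (c * c * h2 - s * (- s * h2)) with (h2 * (s * s + c * c)) by ring. rewrite E; ring. }
  assert (Hhalf : 0 < sin (l / 2)) by (apply sin_gt_0; lra).
  assert (HC1 : 1 - C = 2 * sin (l/2) * sin (l/2)).
  { unfold C. replace l with (2 * (l / 2)) at 1 by field. rewrite cos_2a_sin. ring. }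
  (* regularity consequence: h1 S + h2 (C - 1) = 0 *)
  assert (Rq : h1 * Sl + h2 * (C - 1) = 0).
  { set (k0 := s*h2 + c*h3) in *. set (m := c*h2 - s*h3) in *.
    rewrite K0 in Rg2. replace (1 - s^2) with (c*c) in Rg2 by (simpl; lra). rewrite <- Cm.
    assert (HH : s*c*(h1*Sl + c*m*(C-1)) = 0) by (rewrite <- Rg2; ring).
    apply Rmult_integral in HH as [HH|HH]; [nra|exact HH]. }
  assert (Q : h2 * Sl = h1 * (1 + C)).
  { assert ((h2 * Sl - h1 * (1 + C)) * (1 - C) = 0).
    { replace ((h2 * Sl - h1 * (1 + C)) * (1 - C)) with (- Sl * (h1 * Sl + h2 * (C - 1)) + h1 * (Sl * Sl + C * C - 1)) by ring.
      rewrite Rq, HCS. ring. }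
    apply Rmult_integral in H as [H|H]; nra. }
  set (m := c*h2 - s*h3) in *.
  assert (B2 : cross (psi (sw S (j + 2))) (p (sw S (j + 2))) = V3 h1 h2 (- (s * m))).
  { rewrite A2. rewrite K0. rewrite Cm. f_equal; lra. }
  rewrite B2 in A3.
  split; [|split; [exact Htime|split]].
  - rewrite redd_cross, A3. cbn [v1 v2 v3]. change (sin g) with s. change (cos g) with c.
    rewrite <- Cm.
    assert (HH : s*c*(c*m)*(s*s+c*c) = s*c*(c*m)) by (rewrite E; ring).
    rewrite <- Cm in R3. replace (1 - s^2) with (c*c) by (simpl; lra).
    f_equal; [ring| lra | lra].
  - exists (2 * PI - l). split; [lra|split; [lra|]].
    intros psi' p' YA R0'.
    assert (HL : 0 <= 2 * PI - l) by lra.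
    rewrite redd_cross in R0'.
    pose proof (fun u Hu => yarc_h (2 * PI - l) psi' p' u YA Hu) as YH.
    revert YH.
    destruct (cross (psi' 0) (p' 0)) as [k1 k2 k3].
    intro YH.
    cbn [v1 v2 v3] in R0'. change (sin g) with s in R0' |- *. change (cos g) with c in R0' |- *.
    injection R0' as R1' R2' R3'.
    assert (E1 : k1 = h1) by (apply (Rmult_eq_reg_l (s*c)); nra).
    assert (E2 : k2 = h2) by (apply (Rmult_eq_reg_l (s*c)); nra).
    assert (E3 : k3 = h3).
    { rewrite Ec in R1'. apply (Rmult_eq_reg_l (c*c)); [|nra]. rewrite E2 in R1'.
      apply (Rmult_eq_reg_l s); [|lra]. nra. }
    subst k1 k2 k3.
    split.
    + rewrite redd_cross, (YH _ (conj HL (Rle_refl _))).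
      unfold HY; cbn [v1 v2 v3]. rewrite Rminus_0_r.
      rewrite cos_minus, sin_minus, cos_2PI, sin_2PI. fold C Sl.
      change (sin g) with s. change (cos g) with c.
      replace (1 - s^2) with (c*c) by (simpl; lra).
      f_equal.
      * replace (- h1 * (0 * C - 1 * Sl) + h2 * (1 * C + 0 * Sl)) with h2 by lra.
        replace (s * c * h2 + c * c * h3) with (c * (s * h2 + c * h3)) by ring. rewrite K0; ring.
      * replace (h1 * (1 * C + 0 * Sl) + h2 * (0 * C - 1 * Sl)) with (- h1) by lra. lra.
      * replace (- h1 * (0 * C - 1 * Sl) + h2 * (1 * C + 0 * Sl)) with h2 by lra. lra.
    + intros u Hu HP.
      change (Phi g (psi' u) (p' u)) with (v1 (redd g (psi' u) (p' u))) in HP.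
      rewrite redd_cross, (YH u ltac:(lra)) in HP. unfold HY in HP. cbn [v1 v2 v3] in HP.
      change (sin g) with s in HP. change (cos g) with c in HP. rewrite Rminus_0_r in HP. replace (1 - s^2) with (c*c) in HP by (simpl; lra).
      assert (HP2 : s * c * (- h1 * sin u + h2 * (cos u - 1)) = 0).
      { rewrite <- HP. replace (c * c * h3) with (c * (c * h3)) by ring.
        replace (c * h3) with (- (s * h2)) by lra. ring. }
      assert (HP3 : - h1 * sin u + h2 * (cos u - 1) = 0).
      { apply Rmult_integral in HP2 as [H|H]; [nra|exact H]. }
      assert (Hal : 0 < sin (u / 2)) by (apply sin_gt_0; lra).
      assert (Hu1 : sin u = 2 * sin (u/2) * cos (u/2)) by (replace u with (2 * (u/2)) at 1 by field; apply sin_2a).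
      assert (Hu2 : cos u = 1 - 2 * sin (u/2) * sin (u/2)) by (replace u with (2 * (u/2)) at 1 by field; apply cos_2a_sin).
      assert (Hl1 : Sl = 2 * sin (l/2) * cos (l/2)) by (unfold Sl; replace l with (2 * (l/2)) at 1 by field; apply sin_2a).
      assert (Hl2 : C = 1 - 2 * sin (l/2) * sin (l/2)) by (unfold C; replace l with (2 * (l/2)) at 1 by field; apply cos_2a_sin).
      assert (P1 : h1 * cos (u/2) + h2 * sin (u/2) = 0).
      { rewrite Hu1, Hu2 in HP3.
        assert (HH : -2 * sin (u/2) * (h1 * cos (u/2) + h2 * sin (u/2)) = 0) by (rewrite <- HP3; ring).
        apply Rmult_integral in HH as [HH|HH]; [nra|exact HH]. }
      assert (P2 : h1 * cos (l/2) - h2 * sin (l/2) = 0).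
      { rewrite Hl1, Hl2 in Rq.
        assert (HH : 2 * sin (l/2) * (h1 * cos (l/2) - h2 * sin (l/2)) = 0) by (rewrite <- Rq; ring).
        apply Rmult_integral in HH as [HH|HH]; [nra|exact HH]. }
      assert (P3 : h1 * sin (u/2 + l/2) = 0).
      { rewrite sin_plus.
        replace (h1 * (sin (u / 2) * cos (l / 2) + cos (u / 2) * sin (l / 2))) with
          (sin (l/2) * (h1 * cos (u/2) + h2 * sin (u/2)) + sin (u/2) * (h1 * cos (l/2) - h2 * sin (l/2))) by ring.
        rewrite P1, P2; ring. }
      assert (Hsp : 0 < sin (u/2 + l/2)) by (apply sin_gt_0; lra).
      apply Rmult_integral in P3 as [P3|P3]; [apply Hh1; exact P3| lra].
  - apply not_opt; [exact Hs|].
    destruct NE as [Ad _].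
    assert (T0 : sw S 0 = 0) by (destruct Ad as (_&H0&_); exact H0).
    assert (TT : sw S (n_arcs S) = T) by (destruct Ad as (_&_&H0&_); exact H0).
    pose proof (sw_mono S T Ad j 0 ltac:(lia)) as M1.
    pose proof (sw_mono S T Ad (n_arcs S - (j+3)) (j+3) ltac:(lia)) as M2.
    replace (j + 3 + (n_arcs S - (j + 3)))%nat with (n_arcs S) in M2 by lia.
    rewrite Nat.add_0_l in M1.
    assert (PI / (2 * s) < 2 * PI / s).
    { replace (PI / (2 * s)) with ((2 * PI / s) / 4) by (field; lra).
      assert (0 < 2 * PI / s) by (apply Rdiv_lt_0_compat; lra). lra. }
    change (sin g) with s. lra.
Qed.
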